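(* Consider a wiretap setting with messages $\{1,\dots,M\}$, where $P_{Z|W=m}$ is the distribution of the eavesdropper observation $Z\in\mathcal{Z}$ when message $m$ is sent (for a fixed codebook), $P_Z:=\frac1M\sum_{m=1}^MP_{Z|W=m}$, and $\pi_Z$ is the distribution of $Z$ when no message is sent. Suppose the eavesdropper uses a measurable set $\mathcal{D}_0\subseteq\mathcal{Z}$ on which it declares that no message is sent, and upon observing $z\notin\mathcal{D}_0$ outputs a list of $T(z)$ messages; let $\mathcal{D}_m:=\{z\notin\mathcal{D}_0: m\text{ is in the list for }z\}$ and suppose $P_{Z|W=m}(\mathcal{D}_m)\ge1-\epsilon_m$ with $\epsilon_m\in[0,1]$; let $\epsilon:=\frac1M\sum_m\epsilon_m$. Let $A\in[1,\infty)$ and $\gamma\in[1,\infty)$. (i) If $\pi_Z(\mathcal{D}_0)\ge1-A^{-1}$, then $\frac1A\ge\frac1\gamma\big(1-\epsilon-E_\gamma(P_Z\|\pi_Z)\big)$. (ii) If $\mu_Z$ is any distribution on $\mathcal{Z}$ with $\mu_Z(\mathcal{D}_0)\ge1-A^{-1}$ and $\mu_Z(\mathcal{D}_0^c)>0$, and $T:=\frac1{\mu_Z(\mathcal{D}_0^c)}\int_{\mathcal{D}_0^c}T(z)\,d\mu_Z(z)$, then $$\frac{T}{MA}\ge\frac1\gamma\Big(1-\epsilon-\frac1M\sum_{m=1}^ME_\gamma(P_{Z|W=m}\|\mu_Z)\Big).$$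
   Context: $E_\gamma(P\|Q):=\sup_{\mathcal{A}}\{P(\mathcal{A})-\gamma Q(\mathcal{A})\}$. *)

(* Defs.v *)
From Stdlib Require Import Reals Lra List Classical ClassicalEpsilon.
Open Scope R_scope.

Definition setC {Z : Type} (A : Z -> Prop) : Z -> Prop := fun z => ~ A z.
Definition setT {Z : Type} : Z -> Prop := fun _ => True.

Definition is_sigma_algebra {Z : Type} (F : (Z -> Prop) -> Prop) : Prop :=
  F setT /\
  (forall A, F A -> F (setC A)) /\
  (forall A : nat -> Z -> Prop, (forall n, F (A n)) -> F (fun z => exists n, A n z)).

(* probability measure on (Z, F); values off F are irrelevant *)
Definition is_prob {Z : Type} (F : (Z -> Prop) -> Prop) (mu : (Z -> Prop) -> R) : Prop :=
  (forall A, F A -> 0 <= mu A) /\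
  mu setT = 1 /\
  (forall A : nat -> Z -> Prop,
      (forall n, F (A n)) ->
      (forall i j z, i <> j -> A i z -> A j z -> False) ->
      infinite_sum (fun n => mu (A n)) (mu (fun z => exists n, A n z))).

Definition Egamma {Z : Type} (F : (Z -> Prop) -> Prop)
  (P Q : (Z -> Prop) -> R) (gamma : R) : R :=
  epsilon (inhabits 0%R)
    (fun e => is_lub (fun x => exists A, F A /\ x = P A - gamma * Q A) e).

Definition rsum (M : nat) (f : nat -> R) : R :=
  fold_right Rplus 0 (map f (seq 0 M)).

Definition list_size {Z : Type} (M : nat) (D : nat -> Z -> Prop) (z : Z) : nat :=
  length (filter (fun m => if excluded_middle_informative (D m z) then true else false)
                 (seq 0 M)).

(* integral over the set B of a simple function f with values in {0,...,K}:
   \int_B f dmu = sum_{k=1}^{K} k * mu(B /\ {f = k}) *)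
Definition simple_integral {Z : Type} (mu : (Z -> Prop) -> R) (B : Z -> Prop)
  (K : nat) (f : Z -> nat) : R :=
  rsum (S K) (fun k => INR k * mu (fun z => B z /\ f z = k)).

(* Main.v *)
Require Import Defs.
From Stdlib Require Import Reals List Classical ClassicalEpsilon.
From Stdlib Require Import Lra Lia FunctionalExtensionality PropExtensionality.
Open Scope R_scope.

Lemma sext {Z : Type} (A B : Z -> Prop) : (forall z, A z <-> B z) -> A = B.
Proof. intro H; apply functional_extensionality; intro z; apply propositional_extensionality; auto. Qed.

Lemma meas_compl {Z : Type} (F : (Z -> Prop) -> Prop) (A : Z -> Prop) :
  is_sigma_algebra F -> F A -> F (fun z => ~ A z).
Proof. intros [_ [H _]] HA. exact (H A HA). Qed.

Lemma meas_T {Z : Type} (F : (Z -> Prop) -> Prop) :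
  is_sigma_algebra F -> F (fun z : Z => True).
Proof. intros [H _]. exact H. Qed.

Lemma meas_empty {Z : Type} (F : (Z -> Prop) -> Prop) :
  is_sigma_algebra F -> F (fun z : Z => False).
Proof.
  intros HF. assert (E: (fun z:Z => False) = (fun z => ~ True)).
  { apply sext; tauto. }
  rewrite E. apply meas_compl; auto. apply meas_T; auto.
Qed.

Lemma meas_union2 {Z : Type} (F : (Z -> Prop) -> Prop) (A B : Z -> Prop) :
  is_sigma_algebra F -> F A -> F B -> F (fun z => A z \/ B z).
Proof.
  intros [_ [_ HU]] HA HB.
  set (u := fun n : nat => match n with 0%nat => A | _ => B end).
  assert (H := HU u). 
  replace (fun z => A z \/ B z) with (fun z => exists n, u n z).
  - apply H. intros [|n]; simpl; auto.
  - apply sext. intro z; split.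
    + intros [[|n] Hn]; simpl in Hn; auto.
    + intros [a|b]; [exists 0%nat | exists 1%nat]; simpl; auto.
Qed.

Lemma meas_inter2 {Z : Type} (F : (Z -> Prop) -> Prop) (A B : Z -> Prop) :
  is_sigma_algebra F -> F A -> F B -> F (fun z => A z /\ B z).
Proof.
  intros HF HA HB.
  replace (fun z => A z /\ B z) with (fun z => ~ ((fun z => ~ A z) z \/ (fun z => ~ B z) z)).
  - apply meas_compl; auto. apply meas_union2; auto; apply meas_compl; auto.
  - apply sext. intro z; split.
    + intro H; split; apply NNPP; intro; apply H; auto.
    + intros [a b] [na|nb]; auto.
Qed.

Lemma isum_const0 (c l : R) : infinite_sum (fun _ => c) l -> c = 0.
Proof.
  intro H. destruct (Req_dec c 0) as [|Hc]; auto. exfalso.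
  assert (Hp : 0 < Rabs c / 2) by (assert (0 < Rabs c) by (apply Rabs_pos_lt; auto); lra).
  destruct (H _ Hp) as [N HN].
  pose proof (HN N (le_n N)) as H1. pose proof (HN (S N) (le_S _ _ (le_n N))) as H2.
  simpl in H2. unfold R_dist in *.
  unfold Rabs in *; repeat destruct Rcase_abs; lra.
Qed.

Lemma prob_empty {Z : Type} (F : (Z -> Prop) -> Prop) mu :
  is_sigma_algebra F -> is_prob F mu -> mu (fun z : Z => False) = 0.
Proof.
  intros HF [_ [_ Hadd]].
  specialize (Hadd (fun _ _ => False)). simpl in Hadd.
  eapply isum_const0. apply Hadd.
  - intros; apply meas_empty; auto.
  - intros; auto.
Qed.

Lemma prob_add {Z : Type} (F : (Z -> Prop) -> Prop) mu (A B : Z -> Prop) :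
  is_sigma_algebra F -> is_prob F mu -> F A -> F B -> (forall z, A z -> B z -> False) ->
  mu (fun z => A z \/ B z) = mu A + mu B.
Proof.
  intros HF Hmu HA HB Hd.
  pose proof (prob_empty F mu HF Hmu) as H0.
  destruct Hmu as [_ [_ Hadd]].
  set (u := fun n : nat => match n with 0%nat => A | 1%nat => B | _ => fun _ => False end).
  assert (Hs := Hadd u).
  replace (fun z => A z \/ B z) with (fun z => exists n, u n z) in *.
  2:{ apply sext. intro z; split.
    + intros [[|[|n]] Hn]; simpl in Hn; tauto.
    + intros [a|b]; [exists 0%nat | exists 1%nat]; simpl; auto. }
  apply (uniqueness_sum (fun n => mu (u n))).
  - apply Hs.
    + intros [|[|n]]; simpl; auto. apply meas_empty; auto.
    + intros [|[|i]] [|[|j]] z Hij; simpl; try tauto; try (intros; eapply Hd; eauto); lia.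
  - assert (Hp : forall n, sum_f_R0 (fun n => mu (u n)) (S n) = mu A + mu B).
    { induction n. simpl. reflexivity. simpl. simpl in IHn. rewrite IHn. rewrite H0. ring. }
    intros e He. exists 1%nat. intros n Hn. destruct n. lia. rewrite Hp.
    unfold R_dist. rewrite Rminus_diag, Rabs_R0. auto.
Qed.

Lemma prob_compl {Z : Type} (F : (Z -> Prop) -> Prop) mu (A : Z -> Prop) :
  is_sigma_algebra F -> is_prob F mu -> F A -> mu (fun z => ~ A z) = 1 - mu A.
Proof.
  intros HF Hmu HA.
  assert (H := prob_add F mu A (fun z => ~ A z) HF Hmu HA (meas_compl F A HF HA) (fun z a b => b a)).
  cbv beta in H.
  replace (fun z => A z \/ ~ A z) with (@setT Z) in H.
  2:{ apply sext; intro z; unfold setT; split; [intros _; apply classic | intros _; exact I]. }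
  destruct Hmu as [_ [H1 _]]. lra.
Qed.

Lemma prob_mono {Z : Type} (F : (Z -> Prop) -> Prop) mu (A B : Z -> Prop) :
  is_sigma_algebra F -> is_prob F mu -> F A -> F B -> (forall z, A z -> B z) ->
  mu A <= mu B.
Proof.
  intros HF Hmu HA HB Hs.
  assert (FC : F (fun z => B z /\ ~ A z)) by (apply meas_inter2; auto; apply meas_compl; auto).
  assert (H := prob_add F mu A (fun z => B z /\ ~ A z) HF Hmu HA FC (fun z a b => proj2 b a)).
  cbv beta in H.
  replace (fun z => A z \/ (B z /\ ~ A z)) with B in H.
  2:{ apply sext; intro z; split; [intro b; destruct (classic (A z)); tauto | intros [a|[b _]]; auto]. }
  destruct Hmu as [Hpos _]. specialize (Hpos _ FC). lra.
Qed.

Lemma prob_le1 {Z : Type} (F : (Z -> Prop) -> Prop) mu (A : Z -> Prop) :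
  is_sigma_algebra F -> is_prob F mu -> F A -> mu A <= 1.
Proof.
  intros HF Hmu HA.
  assert (H := prob_mono F mu A setT HF Hmu HA (meas_T F HF) (fun z _ => I)).
  destruct Hmu as [_ [H1 _]]. lra.
Qed.

Lemma prob_pos {Z : Type} (F : (Z -> Prop) -> Prop) mu (A : Z -> Prop) :
  is_prob F mu -> F A -> 0 <= mu A.
Proof. intros [H _] HA; auto. Qed.

Lemma Egamma_ge {Z : Type} (F : (Z -> Prop) -> Prop) P Q gamma (b : R) (S : Z -> Prop) :
  (forall S, F S -> P S - gamma * Q S <= b) -> F S ->
  P S - gamma * Q S <= Egamma F P Q gamma.
Proof.
  intros Hb HS. unfold Egamma.
  set (E := fun x => exists A, F A /\ x = P A - gamma * Q A).
  assert (HbE : bound E). { exists b. intros x [A' [HA' ->]]. auto. }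
  assert (HeE : exists x, E x). { exists (P S - gamma * Q S). exists S; auto. }
  destruct (completeness E HbE HeE) as [m Hm].
  assert (H := epsilon_spec (inhabits 0) (fun e => is_lub E e) (ex_intro _ m Hm)).
  destruct H as [Hub _]. apply Hub. exists S; auto.
Qed.

Lemma fr_shift (l : list R) (a : R) : fold_right Rplus a l = fold_right Rplus 0 l + a.
Proof. induction l; simpl. ring. rewrite IHl. ring. Qed.

Lemma rsum_S n f : rsum (S n) f = rsum n f + f n.
Proof.
  unfold rsum. rewrite seq_S, map_app, fold_right_app. simpl. rewrite fr_shift. ring.
Qed.

Lemma rsum_ext n f g : (forall k, (k < n)%nat -> f k = g k) -> rsum n f = rsum n g.
Proof.
  induction n; intros H. reflexivity.
  rewrite !rsum_S, IHn, H; auto.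
Qed.

Lemma rsum_le n f g : (forall k, (k < n)%nat -> f k <= g k) -> rsum n f <= rsum n g.
Proof.
  induction n; intros H. unfold rsum; simpl; lra.
  rewrite !rsum_S. apply Rplus_le_compat; auto.
Qed.

Lemma rsum_plus n f g : rsum n (fun k => f k + g k) = rsum n f + rsum n g.
Proof. induction n. unfold rsum; simpl; ring. rewrite !rsum_S, IHn. ring. Qed.

Lemma rsum_scal n c f : rsum n (fun k => c * f k) = c * rsum n f.
Proof. induction n. unfold rsum; simpl; ring. rewrite !rsum_S, IHn. ring. Qed.

Lemma rsum_const n c : rsum n (fun _ => c) = INR n * c.
Proof. induction n. unfold rsum; simpl; ring. rewrite !rsum_S, IHn, S_INR. ring. Qed.

Lemma rsum_shift K (a b : nat -> R) :
  rsum (S (S K)) (fun k => INR k * (a k + match k with 0%nat => 0 | S j => b j end)) =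
  rsum (S (S K)) (fun k => INR k * a k) + rsum (S K) (fun j => INR j * b j) + rsum (S K) b.
Proof.
  induction K.
  - unfold rsum; simpl; ring.
  - rewrite (rsum_S (S (S K))), (rsum_S (S (S K)) (fun k => INR k * a k)),
      (rsum_S (S K) (fun j => INR j * b j)), (rsum_S (S K) b).
    rewrite IHK. cbv beta iota. rewrite (S_INR (S K)). ring.
Qed.

Lemma list_size_S {Z : Type} n (D : nat -> Z -> Prop) z :
  list_size (S n) D z = (list_size n D z + if excluded_middle_informative (D n z) then 1 else 0)%nat.
Proof.
  unfold list_size. rewrite seq_S, filter_app, length_app. simpl.
  destruct (excluded_middle_informative (D n z)); simpl; lia.
Qed.

Lemma list_size_le {Z : Type} n (D : nat -> Z -> Prop) z : (list_size n D z <= n)%nat.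
Proof.
  induction n. unfold list_size; simpl; lia. rewrite list_size_S.
  destruct (excluded_middle_informative (D n z)); lia.
Qed.

Lemma meas_level {Z : Type} (F : (Z -> Prop) -> Prop) (D : nat -> Z -> Prop) :
  is_sigma_algebra F -> forall n, (forall m, (m < n)%nat -> F (D m)) ->
  forall k, F (fun z => list_size n D z = k).
Proof.
  intros HF n. induction n; intros HD k.
  - destruct k.
    + replace (fun z => list_size 0 D z = 0%nat) with (fun z : Z => True).
      apply meas_T; auto. apply sext; intro z; unfold list_size; simpl; tauto.
    + replace (fun z => list_size 0 D z = S k) with (fun z : Z => False).
      apply meas_empty; auto. apply sext; intro z; unfold list_size; simpl; split; [tauto | discriminate].
  - assert (HDn : F (D n)) by (apply HD; lia).
    assert (IH : forall k, F (fun z => list_size n D z = k)) by (apply IHn; intros; apply HD; lia).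
    destruct k.
    + replace (fun z => list_size (S n) D z = 0%nat) with
        (fun z => list_size n D z = 0%nat /\ ~ D n z).
      apply meas_inter2; auto. apply meas_compl; auto.
      apply sext; intro z; rewrite list_size_S.
      destruct (excluded_middle_informative (D n z)) as [d|d]; simpl; split.
      * intros [H1 H2]; tauto.
      * intros; exfalso; lia.
      * intros [H1 H2]; lia.
      * intros; split; [lia|auto].
    + replace (fun z => list_size (S n) D z = S k) with
        (fun z => (list_size n D z = S k /\ ~ D n z) \/ (list_size n D z = k /\ D n z)).
      apply meas_union2; auto; apply meas_inter2; auto. apply meas_compl; auto.
      apply sext; intro z; rewrite list_size_S.
      destruct (excluded_middle_informative (D n z)) as [d|d]; simpl; split.
      * intros [[H1 H2]|[H1 H2]]; [tauto|lia].
      * intros; right; split; [lia|auto].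
      * intros [[H1 H2]|[H1 H2]]; [lia|tauto].
      * intros; left; split; [lia|auto].
Qed.

Lemma meas_le {Z : Type} (F : (Z -> Prop) -> Prop) (f : Z -> nat) :
  is_sigma_algebra F -> (forall k, F (fun z => f z = k)) ->
  forall K, F (fun z => (f z <= K)%nat).
Proof.
  intros HF Hf K. induction K.
  - replace (fun z => (f z <= 0)%nat) with (fun z => f z = 0%nat). auto.
    apply sext; intro; split; intros; lia.
  - replace (fun z => (f z <= S K)%nat) with (fun z => (f z <= K)%nat \/ f z = S K).
    apply meas_union2; auto. apply sext; intro; split; intros; lia.
Qed.

Lemma partition_sum {Z : Type} (F : (Z -> Prop) -> Prop) mu (E : Z -> Prop) (f : Z -> nat) :
  is_sigma_algebra F -> is_prob F mu -> F E -> (forall k, F (fun z => f z = k)) ->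
  forall K, rsum (S K) (fun k => mu (fun z => E z /\ f z = k)) = mu (fun z => E z /\ (f z <= K)%nat).
Proof.
  intros HF Hmu HE Hf K. induction K.
  - rewrite rsum_S. unfold rsum at 1; simpl.
    replace (fun z => E z /\ (f z <= 0)%nat) with (fun z => E z /\ f z = 0%nat). ring.
    apply sext; intro; split; intros [? ?]; split; auto; lia.
  - rewrite rsum_S, IHK.
    replace (fun z => E z /\ (f z <= S K)%nat) with
      (fun z => (E z /\ (f z <= K)%nat) \/ (E z /\ f z = S K)).
    + rewrite prob_add with (F := F); auto.
      apply meas_inter2; auto. apply meas_le; auto.
      apply meas_inter2; auto.
      intros z [_ H1] [_ H2]; lia.
    + apply sext; intro; split; [intros [?|?]; split; (tauto || lia) | intros [? ?]; destruct (Nat.le_gt_cases (f z) K); [left|right]; split; auto; lia].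
Qed.

Lemma key {Z : Type} (F : (Z -> Prop) -> Prop) mu (B : Z -> Prop) (D : nat -> Z -> Prop) N :
  is_sigma_algebra F -> is_prob F mu -> F B -> (forall m, (m < N)%nat -> F (D m)) ->
  (forall m z, (m < N)%nat -> D m z -> B z) ->
  forall n, (n <= N)%nat -> forall K, (n <= K)%nat ->
  simple_integral mu B K (list_size n D) = rsum n (fun m => mu (D m)).
Proof.
  intros HF Hmu HB HD HDB n. induction n; intros Hn K HK.
  - unfold simple_integral.
    rewrite (rsum_ext _ _ (fun _ => 0)). rewrite rsum_const. unfold rsum; simpl; ring.
    intros k _. destruct k. simpl; ring.
    replace (fun z => B z /\ list_size 0 D z = S k) with (fun z : Z => False).
    rewrite (prob_empty F mu HF Hmu); ring.
    apply sext; intro z; unfold list_size; simpl; split; [tauto | intros [_ H]; discriminate].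
  - destruct K as [|K]; [lia|].
    assert (HDn : F (D n)) by (apply HD; lia).
    assert (Hlev : forall k, F (fun z => list_size n D z = k))
      by (apply meas_level; auto; intros; apply HD; lia).
    pose (a := fun k => mu (fun z => B z /\ list_size n D z = k /\ ~ D n z)).
    pose (bb := fun k => mu (fun z => B z /\ list_size n D z = k /\ D n z)).
    assert (Fa : forall k, F (fun z => B z /\ list_size n D z = k /\ ~ D n z)).
    { intro k. apply meas_inter2; auto. apply meas_inter2; auto. apply meas_compl; auto. }
    assert (Fb : forall k, F (fun z => B z /\ list_size n D z = k /\ D n z)).
    { intro k. apply meas_inter2; auto. apply meas_inter2; auto. }
    assert (Hab : forall k, mu (fun z => B z /\ list_size n D z = k) = a k + bb k).
    { intro k. unfold a, bb. rewrite <- prob_add with (F := F); auto.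
      - f_equal. apply sext; intro z. destruct (classic (D n z)); tauto.
      - intros z [_ [_ H1]] [_ [_ H2]]; auto. }
    assert (Hsplit : forall k, mu (fun z => B z /\ list_size (S n) D z = k) =
                               a k + match k with 0%nat => 0 | S j => bb j end).
    { intro k. destruct k.
      - unfold a. rewrite Rplus_0_r. f_equal. apply sext; intro z. rewrite list_size_S.
        destruct (excluded_middle_informative (D n z)) as [d|d]; simpl; split.
        + intros [? ?]; exfalso; lia.
        + tauto.
        + intros [? ?]; split; [auto|split; [lia|auto]].
        + intros [? [? ?]]; split; [auto|lia].
      - unfold a, bb. rewrite <- prob_add with (F := F); auto.
        2:{ intros z [_ [_ H1]] [_ [_ H2]]; auto. }
        f_equal. apply sext; intro z. rewrite list_size_S.
        destruct (excluded_middle_informative (D n z)) as [d|d]; simpl; split.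
        + intros [? ?]; right; split; [auto|split; [lia|auto]].
        + intros [[? [? ?]]|[? [? ?]]]; [tauto|split; [auto|lia]].
        + intros [? ?]; left; split; [auto|split; [lia|auto]].
        + intros [[? [? ?]]|[? [? ?]]]; [split; [auto|lia]|tauto]. }
    assert (IH := IHn ltac:(lia) K ltac:(lia)).
    unfold simple_integral in IH |- *.
    rewrite (rsum_ext _ _ (fun k => INR k * a k + INR k * bb k)) in IH
      by (intros; rewrite Hab; ring).
    rewrite rsum_plus in IH.
    rewrite (rsum_ext _ _ (fun k => INR k * (a k + match k with 0%nat => 0 | S j => bb j end)))
      by (intros; rewrite Hsplit; reflexivity).
    rewrite rsum_shift.
    rewrite (rsum_S (S K) (fun k => INR k * a k)).
    assert (Ha0 : a (S K) = 0).
    { unfold a. replace (fun z => B z /\ list_size n D z = S K /\ ~ D n z) with (fun z : Z => False).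
      apply (prob_empty F mu HF Hmu).
      apply sext; intro z; split; [tauto|]. intros [_ [H _]].
      pose proof (list_size_le n D z). lia. }
    rewrite (rsum_ext (S K) bb (fun k => mu (fun z => (B z /\ D n z) /\ list_size n D z = k))).
    2:{ intros k _. unfold bb. f_equal. apply sext; intro z; tauto. }
    rewrite (partition_sum F mu); auto.
    2:{ apply meas_inter2; auto. }
    replace (fun z => (B z /\ D n z) /\ (list_size n D z <= K)%nat) with (D n).
    2:{ apply sext; intro z; split.
        - intro d; split; [split; [apply (HDB n); auto; lia | auto] |].
          pose proof (list_size_le n D z). lia.
        - tauto. }
    rewrite (rsum_S n). rewrite <- IH. rewrite Ha0. ring.
Qed.

Theorem mainTheorem17
  (Z : Type) (F : (Z -> Prop) -> Prop) (HF : is_sigma_algebra F)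
  (M : nat) (HM : (0 < M)%nat)
  (PW : nat -> (Z -> Prop) -> R) (HPW : forall m, (m < M)%nat -> is_prob F (PW m))
  (piZ : (Z -> Prop) -> R) (Hpi : is_prob F piZ)
  (D0 : Z -> Prop) (HD0 : F D0)
  (D : nat -> Z -> Prop)
  (HD : forall m, (m < M)%nat -> F (D m))
  (HDsub : forall m z, (m < M)%nat -> D m z -> ~ D0 z)
  (eps : nat -> R)
  (Heps : forall m, (m < M)%nat -> 0 <= eps m <= 1)
  (Hdec : forall m, (m < M)%nat -> PW m (D m) >= 1 - eps m)
  (A gamma : R) (HA : 1 <= A) (Hgamma : 1 <= gamma) :
  let epsbar := / INR M * rsum M eps in
  let PZ := fun S : Z -> Prop => / INR M * rsum M (fun m => PW m S) in
  (piZ D0 >= 1 - / A ->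
     / A >= / gamma * (1 - epsbar - Egamma F PZ piZ gamma))
  /\
  (forall muZ : (Z -> Prop) -> R,
     is_prob F muZ ->
     muZ D0 >= 1 - / A ->
     muZ (setC D0) > 0 ->
     let T := / muZ (setC D0) * simple_integral muZ (setC D0) M (list_size M D) in
     T / (INR M * A) >=
       / gamma * (1 - epsbar - / INR M * rsum M (fun m => Egamma F (PW m) muZ gamma))).
Proof.
  intros epsbar PZ.
  assert (HMpos : 0 < INR M) by (apply lt_0_INR; lia).
  assert (iM : INR M * / INR M = 1) by (field; lra).
  assert (iMp : 0 < / INR M) by (apply Rinv_0_lt_compat; lra).
  assert (igp : 0 < / gamma) by (apply Rinv_0_lt_compat; lra).
  assert (ig : / gamma * gamma = 1) by (field; lra).
  assert (iAp : 0 < / A) by (apply Rinv_0_lt_compat; lra).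
  assert (iA : A * / A = 1) by (field; lra).
  assert (FC : F (setC D0)) by exact (meas_compl F D0 HF HD0).
  assert (HDC : forall m, (m < M)%nat -> forall z, D m z -> setC D0 z)
    by (intros m Hm z Hz; exact (HDsub m z Hm Hz)).
  assert (Heb : rsum M (fun m => 1 - eps m) = INR M - rsum M eps).
  { replace (fun m => 1 - eps m) with (fun m => 1 + (-1) * eps m)
      by (apply functional_extensionality; intro; ring).
    rewrite rsum_plus, rsum_scal, rsum_const. ring. }
  split.
  - intro Hpi0.
    assert (HpiC : piZ (setC D0) = 1 - piZ D0) by exact (prob_compl F piZ D0 HF Hpi HD0).
    assert (HPZC : PZ (setC D0) >= 1 - epsbar).
    { unfold PZ, epsbar. apply Rle_ge.
      assert (rsum M (fun m => 1 - eps m) <= rsum M (fun m => PW m (setC D0))).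
      { apply rsum_le. intros k Hk.
        assert (PW k (D k) <= PW k (setC D0)) by (apply prob_mono with (F := F); auto; apply HDC; auto).
        specialize (Hdec k Hk). lra. }
      rewrite Heb in H. nra. }
    assert (HE : PZ (setC D0) - gamma * piZ (setC D0) <= Egamma F PZ piZ gamma).
    { apply Egamma_ge with (b := 1); auto. intros S HS.
      assert (PZ S <= 1).
      { unfold PZ. assert (rsum M (fun m => PW m S) <= rsum M (fun _ => 1)).
        { apply rsum_le. intros k Hk. apply prob_le1 with (F := F); auto. }
        rewrite rsum_const in H. nra. }
      assert (0 <= piZ S) by (apply prob_pos with (F := F); auto). nra. }
    set (E := Egamma F PZ piZ gamma) in *.
    assert (HX : 1 - epsbar - E <= gamma * / A) by nra.
    apply Rle_ge. nra.
  - intros muZ Hmu HmD0 HmC T.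
    assert (HmuC : muZ (setC D0) = 1 - muZ D0) by exact (prob_compl F muZ D0 HF Hmu HD0).
    assert (Hkey : simple_integral muZ (setC D0) M (list_size M D) = rsum M (fun m => muZ (D m))).
    { apply (key F muZ (setC D0) D M); auto. }
    set (S := rsum M (fun m => muZ (D m))) in *.
    assert (HS0 : 0 <= S).
    { unfold S. replace 0 with (rsum M (fun _ => 0)).
      apply rsum_le; intros; apply prob_pos with (F := F); auto.
      rewrite rsum_const; ring. }
    assert (HEs : rsum M (fun m => 1 - eps m) - gamma * S <=
                  rsum M (fun m => Egamma F (PW m) muZ gamma)).
    { unfold S. rewrite <- rsum_scal.
      replace (rsum M (fun m => 1 - eps m) - rsum M (fun k => gamma * muZ (D k)))
        with (rsum M (fun m => (1 - eps m) + (-1) * (gamma * muZ (D m)))).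
      2:{ rewrite rsum_plus, rsum_scal. ring. }
      apply rsum_le. intros k Hk.
      assert (PW k (D k) - gamma * muZ (D k) <= Egamma F (PW k) muZ gamma).
      { apply Egamma_ge with (b := 1); auto. intros S' HS'.
        assert (PW k S' <= 1) by (apply prob_le1 with (F := F); auto).
        assert (0 <= muZ S') by (apply prob_pos with (F := F); auto). nra. }
      specialize (Hdec k Hk). lra. }
    rewrite Heb in HEs.
    set (c := muZ (setC D0)) in *.
    assert (Hc : c <= / A) by lra.
    assert (icp : 0 < / c) by (apply Rinv_0_lt_compat; lra).
    assert (ic : c * / c = 1) by (field; lra).
    assert (HAc : A <= / c) by nra.
    assert (Hprod : 1 <= / c * / A) by nra.
    assert (HT : T / (INR M * A) = (/ INR M * S) * (/ c * / A)).
    { unfold T. rewrite Hkey. unfold Rdiv. rewrite Rinv_mult. ring. }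
    rewrite HT. unfold epsbar.
    set (ES := rsum M (fun m => Egamma F (PW m) muZ gamma)) in *.
    set (s := / INR M * S).
    assert (H1 : 1 - / INR M * rsum M eps - / INR M * ES <= gamma * s).
    { unfold s. assert (/ INR M * (INR M - rsum M eps - gamma * S) <= / INR M * ES)
        by (apply Rmult_le_compat_l; lra). nra. }
    assert (0 <= s) by (unfold s; nra).
    apply Rle_ge. nra.
Qed.
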